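(* Let $p$ be a prime, $g\ge 2$, and $\pi=\langle a_1,b_1,\dots,a_g,b_g\mid \prod_{i=1}^g[a_i,b_i]=1\rangle$. Let $r\in\{1,2\}$ and let $H\subset\pi^{\mathrm{ab}}/p$ be a subgroup of rank $\ge r$. Then there exists a surjective homomorphism $q:\pi\to Q=\mathbb{Z}^{\ast r}$ (the free group of rank $r$) such that the composition $H\subset\pi^{\mathrm{ab}}/p\to Q^{\mathrm{ab}}/p\cong(\mathbb{Z}/p)^r$ is surjective. *)

(* Defs.v *)
From mathcomp Require Import all_boot all_order all_algebra.
Set Implicit Arguments. Unset Strict Implicit. Unset Printing Implicit Defensive.
Import GRing.Theory.
Local Open Scope ring_scope.

(* The free group F_r = Z^{*r} on generators x_0,...,x_{r-1}, realised as  *)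
(* the set of reduced words.  A letter (k, false) is x_k, (k, true) is      *)
(* x_k^{-1}.                                                                *)
Definition letter (r : nat) := ('I_r * bool)%type.
Definition fword (r : nat) := seq (letter r).

Definition fpush (r : nat) (x : letter r) (w : fword r) : fword r :=
  match w with
  | y :: w' => if (y.1 == x.1) && (y.2 != x.2) then w' else x :: w
  | [::] => [:: x]
  end.

Definition freduce (r : nat) (w : fword r) : fword r := foldr (@fpush r) [::] w.

Definition freduced (r : nat) (w : fword r) : bool := freduce w == w.

Definition fmul (r : nat) (u v : fword r) : fword r := freduce (u ++ v).
Definition finv (r : nat) (u : fword r) : fword r :=
  rev (map (fun x : letter r => (x.1, ~~ x.2)) u).
Definition fcomm (r : nat) (u v : fword r) : fword r :=
  freduce (u ++ v ++ finv u ++ finv v).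

(* exponent sum of the generator x_k in a word: the k-th coordinate of the *)
(* abelianization map F_r -> Z^r                                           *)
Definition expsum (r : nat) (w : fword r) (k : 'I_r) : int :=
  \sum_(x <- w | x.1 == k) (if x.2 then (-1)%R else 1%R).

(* Homomorphisms from the surface group                                    *)
(*   pi = < a_1,b_1,...,a_g,b_g | prod_i [a_i,b_i] = 1 >                   *)
(* to F_r are exactly assignments qa, qb : 'I_g -> F_r of the generators   *)
(* satisfying the surface relation.                                        *)
Definition surface_hom (g r : nat) (qa qb : 'I_g -> fword r) : Prop :=
  (forall i, freduced (qa i)) /\ (forall i, freduced (qb i)) /\
  freduce (flatten [seq fcomm (qa i) (qb i) | i <- enum 'I_g]) = [::].

Definition gen_image (g r : nat) (qa qb : 'I_g -> fword r)
    (s : ('I_g + 'I_g) * bool) : fword r :=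
  let w := match s.1 with inl i => qa i | inr i => qb i end in
  if s.2 then finv w else w.

Definition surface_hom_surj (g r : nat) (qa qb : 'I_g -> fword r) : Prop :=
  forall w : fword r, freduced w ->
    exists s : seq (('I_g + 'I_g) * bool),
      freduce (flatten (map (gen_image qa qb) s)) = w.

(* pi^ab / p = ('F_p)^(2g) with basis a_1..a_g (indices lshift g i) and     *)
(* b_1..b_g (indices rshift g i); Q^ab/p = ('F_p)^r.  The induced map       *)
(* pi^ab/p -> Q^ab/p acting on row vectors is the matrix whose row for a    *)
(* generator is the mod-p exponent-sum vector of its image.                *)
Definition ab_mod_p_map (p g r : nat) (qa qb : 'I_g -> fword r)
  : 'M['F_p]_(g + g, r) :=
  \matrix_(j < g + g, k < r)
     ((expsum (match split j with inl i => qa i | inr i => qb i end) k)%:~R).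

(* Main.v *)
From Stdlib Require Import Classical.
Require Import Defs.
From mathcomp Require Import all_boot all_order all_algebra.
Local Open Scope ring_scope.

Module Helpers.
Set Implicit Arguments. Unset Strict Implicit. Unset Printing Implicit Defensive.
Import GRing.Theory.

Definition pr2 (m : nat) (a b : 'I_m) : 'I_2 -> 'I_m :=
  fun k => if k == ord0 then a else b.

Section LA.
Variables (F : fieldType) (m n : nat) (K : 'M[F]_(m, n)).

Lemma sub_row_rank1 (v : 'rV[F]_n) k (B : 'M[F]_(k, n)) :
  v != 0 -> (v <= B)%MS -> (\rank B <= 1)%N -> (B <= v)%MS.
Proof.
move=> vnz vB rB; have [_ e] := mxrank_leqif_sup vB.
rewrite -e rank_rV vnz; have := mxrankS vB; rewrite rank_rV vnz.
by move=> h; apply/eqP/anti_leq; rewrite h rB.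
Qed.

Lemma row_pr2_0 a b : row ord0 (rowsub (pr2 a b) K) = row a K.
Proof. by rewrite row_rowsub. Qed.
Lemma row_pr2_1 a b : row ord_max (rowsub (pr2 a b) K) = row b K.
Proof. by rewrite row_rowsub. Qed.

Lemma pr2_sub k a b (B : 'M[F]_(k, n)) :
  (row a K <= B)%MS -> (row b K <= B)%MS -> (rowsub (pr2 a b) K <= B)%MS.
Proof.
move=> ha hb; apply/row_subP => i; rewrite row_rowsub /pr2.
by case: (i == ord0).
Qed.

Lemma rank2_exists : (2 <= \rank K)%N -> exists a b, (2 <= \rank (rowsub (pr2 a b) K))%N.
Proof.
move=> h2; apply: NNPP => hn.
have hle : forall a b, (\rank (rowsub (pr2 a b) K) <= 1)%N.
  move=> a b; case: leqP => // hlt; exfalso; apply: hn; by exists a, b.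
have [K0|Knz] := eqVneq K 0.
  by move: h2; rewrite K0 mxrank0.
have [a ha] : exists a, row a K != 0.
  apply: NNPP => hna; move/eqP: Knz; apply; apply/row_matrixP => i.
  rewrite row0; apply/eqP; apply: NNPP => hi; apply: hna; by exists i; apply/negP.
have : (K <= row a K)%MS.
  apply/row_subP => i.
  have hs := sub_row_rank1 ha _ (hle a i).
  have : (rowsub (pr2 a i) K <= row a K)%MS.
    by apply: hs; rewrite -(row_pr2_0 a i) row_sub.
  by move/(submx_trans (row_sub ord_max _)); rewrite row_pr2_1.
move/mxrankS; rewrite rank_rV ha => h1.
by move: (leq_trans h2 h1).
Qed.

Lemma rank2_zero a b c : (2 <= \rank (rowsub (pr2 a b) K))%N ->
  (\rank (rowsub (pr2 a c) K) <= 1)%N -> (\rank (rowsub (pr2 b c) K) <= 1)%N ->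
  row c K = 0.
Proof.
move=> h2 hac hbc; apply/eqP; apply: NNPP => /negP hc.
have s1 := sub_row_rank1 hc _ hac; have s2 := sub_row_rank1 hc _ hbc.
have ha : (row a K <= row c K)%MS.
  rewrite -(row_pr2_0 a c); apply: submx_trans (row_sub _ _) (s1 _).
  by rewrite -(row_pr2_1 a c) row_sub.
have hb : (row b K <= row c K)%MS.
  rewrite -(row_pr2_0 b c); apply: submx_trans (row_sub _ _) (s2 _).
  by rewrite -(row_pr2_1 b c) row_sub.
have := mxrankS (pr2_sub ha hb); rewrite rank_rV (negPf hc) => h.
by move: (leq_trans h2 h).
Qed.

Lemma rank2_swap a b : \rank (rowsub (pr2 a b) K) = \rank (rowsub (pr2 b a) K).
Proof.
have h : forall a b, (rowsub (pr2 a b) K <= rowsub (pr2 b a) K)%MS.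
  move=> x y; apply: pr2_sub.
    by rewrite -(row_pr2_1 y x) row_sub.
  by rewrite -(row_pr2_0 y x) row_sub.
by apply/eqP; rewrite eqn_leq !mxrankS.
Qed.

Lemma rank2_same a : (\rank (rowsub (pr2 a a) K) <= 1)%N.
Proof.
apply: leq_trans (mxrankS (pr2_sub (submx_refl (row a K)) (submx_refl (row a K)))) _.
exact: rank_leq_row.
Qed.
End LA.

Section Frame.
Variables (g r : nat) (t : 'I_g + 'I_g -> option 'I_r).

Definition wt s : fword r := if t s is Some k then [:: (k, false)] else [::].
Definition qA i := wt (inl i).
Definition qB i := wt (inr i).

Lemma expsum_wt s k : expsum (wt s) k = if t s == Some k then 1 else 0.
Proof.
rewrite /wt /expsum; case: (t s) => [k'|]; last by rewrite big_nil.
rewrite big_cons big_nil /=.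
by case: eqVneq => [->|ne]; rewrite ?eqxx ?addr0 //; case: eqVneq => // -[] /eqP; rewrite (negPf ne).
Qed.

Lemma mat_wt p : ab_mod_p_map p qA qB =
  \matrix_(j, k) (if t (split j) == Some k then 1 else 0).
Proof.
apply/matrixP => j k; rewrite !mxE.
have -> : expsum (match split j with inl i => qA i | inr i => qB i end) k
          = expsum (wt (split j)) k by case: (split j).
by rewrite expsum_wt; case: ifP.
Qed.

Lemma mul_wt (F : fieldType) m (H : 'M[F]_(m, g + g)) (c : 'I_r -> 'I_(g + g)) :
  (forall k, t (split (c k)) = Some k) ->
  (forall j k, t (split j) = Some k -> j != c k -> forall x, H x j = 0) ->
  H *m \matrix_(j, k) (if t (split j) == Some k then 1 else 0) = colsub c H.
Proof.
move=> hc h; apply/matrixP => x k; rewrite !mxE (bigD1 (c k)) //= mxE hc eqxx mulr1.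
rewrite big1 ?addr0 // => j hj; rewrite mxE; case: eqP => [e|_]; last by rewrite mulr0.
by rewrite (h j k e hj) mul0r.
Qed.

Lemma reduced_wt s : freduced (wt s).
Proof. by rewrite /freduced /wt; case: (t s) => //= k; rewrite eqxx. Qed.

Lemma surj_wt (f : 'I_r -> 'I_g + 'I_g) : (forall k, t (f k) = Some k) ->
  surface_hom_surj qA qB.
Proof.
move=> hf w /eqP hw; exists (map (fun x : letter r => (f x.1, x.2)) w).
rewrite -[RHS]hw; congr freduce.
elim: w {hw} => //= [[k b] w IH] /=; rewrite IH.
have -> : gen_image qA qB (f k, b) = [:: (k, b)].
  rewrite /gen_image /=.
  have -> : (match f k with inl i => qA i | inr i => qB i end) = wt (f k)
    by case: (f k).
  by rewrite /wt hf; case: b.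
by [].
Qed.

Lemma fcomm_nil (x : letter r) : fcomm [:: x] [::] = [::] /\ fcomm [::] [:: x] = [::].
Proof.
case: x => k b; rewrite /fcomm /freduce /=.
by rewrite eqxx; case: b.
Qed.

Lemma flatten_nil (T : Type) (I : Type) (f : I -> seq T) s :
  (forall i, f i = [::]) -> flatten (map f s) = [::].
Proof. by move=> h; elim: s => //= i s ->; rewrite h. Qed.

Lemma rel_trivial : (forall i, t (inl i) = None \/ t (inr i) = None) ->
  surface_hom qA qB.
Proof.
move=> h; split; first by move=> i; apply: reduced_wt.
split; first by move=> i; apply: reduced_wt.
rewrite flatten_nil // => i; rewrite /qA /qB /wt.
case: (h i) => ->; case: (t _) => [k|] //; by case: (fcomm_nil (k, false)).
Qed.
End Frame.

Section SP.
Variables (g : nat) (i j : 'I_g).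
Hypothesis ij : i != j.

Definition tsp (s : 'I_g + 'I_g) : option 'I_2 :=
  match s with
  | inl l => if l == i then Some ord0 else if l == j then Some ord_max else None
  | inr l => if l == i then Some ord_max else if l == j then Some ord0 else None
  end.

Definition x0 : letter 2 := (ord0, false).
Definition x1 : letter 2 := (ord_max, false).
Definition Ci := fcomm [:: x0] [:: x1].
Definition Cj := fcomm [:: x1] [:: x0].

Lemma C1 : foldr (@fpush 2) Cj Ci = [::]. Proof. by vm_compute. Qed.
Lemma C2 : foldr (@fpush 2) Ci Cj = [::]. Proof. by vm_compute. Qed.
Lemma C3 : foldr (@fpush 2) [::] Ci = Ci. Proof. by vm_compute. Qed.
Lemma C4 : foldr (@fpush 2) [::] Cj = Cj. Proof. by vm_compute. Qed.

Let f l := fcomm (qA tsp l) (qB tsp l).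

Lemma f_eq l : f l = if l == i then Ci else if l == j then Cj else [::].
Proof.
rewrite /f /qA /qB /wt /=.
by case: ifP => _; [|case: ifP].
Qed.

Lemma rel_ind s : uniq s ->
  freduce (flatten (map f s)) =
  if (i \in s) && (j \in s) then [::] else if i \in s then Ci
  else if j \in s then Cj else [::].
Proof.
elim: s => //= l s IH /andP [ls us].
rewrite /freduce foldr_cat -/(freduce _) IH // f_eq !inE.
case: eqVneq => [el|nil].
  subst l; rewrite /= (negPf ls) (eq_sym j i) (negPf ij) /=.
  by case: (j \in s); vm_compute.
case: eqVneq => [el|njl].
  subst l; rewrite /= ?eqxx (negPf ls) /=. rewrite andbF andbT.
  by case: (i \in s); vm_compute.
by [].
Qed.

Lemma rel_sp : surface_hom (qA tsp) (qB tsp).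
Proof.
split; first by move=> l; apply: reduced_wt.
split; first by move=> l; apply: reduced_wt.
by rewrite -/(f _) (rel_ind (enum_uniq _)) !mem_enum.
Qed.
End SP.

Section Main.
Variables (p g : nat) (H : 'M['F_p]_(g + g)).
Let K := H^T.

Lemma rank_colsub r (c : 'I_r -> 'I_(g + g)) : \rank (colsub c H) = \rank (rowsub c K).
Proof. by rewrite -mxrank_tr trmx_mxsub. Qed.

Lemma finish r (t : 'I_g + 'I_g -> option 'I_r) (c : 'I_r -> 'I_(g + g)) :
  (forall k, t (split (c k)) = Some k) ->
  (forall j k, t (split j) = Some k -> j != c k -> row j K = 0) ->
  (r <= \rank (rowsub c K))%N ->
  row_full (H *m ab_mod_p_map p (qA t) (qB t)).
Proof.
move=> hc hz hr; rewrite mat_wt (mul_wt hc).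
  by rewrite /row_full eqn_leq rank_leq_col rank_colsub.
move=> j k e ne x; move/rowP/(_ x): (hz j k e ne).
by rewrite !mxE.
Qed.

Lemma split_l (i : 'I_g) : split (lshift g i) = inl i :> ('I_g + 'I_g).
Proof. exact: (unsplitK (inl i)). Qed.
Lemma split_r (i : 'I_g) : split (rshift g i) = inr i :> ('I_g + 'I_g).
Proof. exact: (unsplitK (inr i)). Qed.

Definition samepair (s s' : 'I_g + 'I_g) :=
  exists i, (s = inl i /\ s' = inr i) \/ (s = inr i /\ s' = inl i).

Lemma DP a b : (2 <= \rank (rowsub (pr2 a b) K))%N -> ~ samepair (split a) (split b) ->
  exists (qa qb : 'I_g -> fword 2),
    surface_hom qa qb /\ surface_hom_surj qa qb /\
    row_full (H *m ab_mod_p_map p qa qb).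
Proof.
move=> hr hsp.
have ab : split a != split b.
  apply/eqP => e; have ab : a = b by rewrite -(splitK a) e splitK.
  by move: hr; rewrite ab => hr; move: (leq_trans hr (rank2_same K b)).
pose t s : option 'I_2 := if s == split a then Some ord0
  else if s == split b then Some ord_max else None.
have hc : forall k, t (split (pr2 a b k)) = Some k.
  move=> k; rewrite /t /pr2; case: (eqVneq k ord0) => [->|nk]; first by rewrite eqxx.
  rewrite eq_sym (negPf ab) eqxx; congr Some; apply/val_inj => /=.
  by case: k nk => [[|[|m]] //] /=.
exists (qA t), (qB t); split; [|split].
- have key : forall s, t s = None \/ (s == split a) || (s == split b).
    by move=> s; rewrite /t; case: ifP => _; [right|case: ifP => _; [right|left]].
  apply: rel_trivial => i.
  case: (key (inl i)) => [h|h1]; first by left.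
  case: (key (inr i)) => [h|h2]; first by right.
  exfalso; case/orP: h1 => /eqP h1; case/orP: h2 => /eqP h2.
  + by rewrite -h2 in h1.
  + by apply: hsp; exists i; left.
  + by apply: hsp; exists i; right.
  + by rewrite -h2 in h1.
- by apply: (surj_wt (f := fun k => split (pr2 a b k))).
- apply: (finish hc) => // j k e ne; exfalso; move/negP: ne; apply.
  move: e; rewrite /t /pr2.
  case: eqVneq => [e1 [<-]|_]; first by rewrite -(splitK j) e1 splitK.
  case: eqVneq => [e1 [<-]|_] //=.
  by rewrite -(splitK j) e1 splitK.
Qed.

Lemma SPcase (Hg : (2 <= g)%N) i :
  (2 <= \rank (rowsub (pr2 (lshift g i) (rshift g i)) K))%N ->
  (forall c, split c != inl i -> split c != inr i -> row c K = 0) ->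
  exists (qa qb : 'I_g -> fword 2),
    surface_hom qa qb /\ surface_hom_surj qa qb /\
    row_full (H *m ab_mod_p_map p qa qb).
Proof.
move=> hr hz.
have [j ij] : exists j : 'I_g, i != j.
  have h0 : (0 < g)%N by apply: leq_trans Hg.
  have h1 : (1 < g)%N by [].
  case: (eqVneq i (Ordinal h0)) => e.
    by exists (Ordinal h1); rewrite e; apply/eqP => -[].
  by exists (Ordinal h0).
exists (qA (tsp i j)), (qB (tsp i j)); split; [|split].
- exact: rel_sp.
- apply: (surj_wt (f := fun k : 'I_2 => if k == ord0 then inl i else inr i)).
  move=> k; case: (eqVneq k ord0) => [->|nk] /=; first by rewrite eqxx.
  rewrite eqxx; congr Some; apply/val_inj => /=.
  by case: k nk => [[|[|m]] //] /=.
- have hc : forall k, tsp i j (split (pr2 (lshift g i) (rshift g i) k)) = Some k.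
    move=> k; rewrite /pr2; case: (eqVneq k ord0) => [->|nk] /=.
      by rewrite split_l /= eqxx.
    rewrite split_r /= eqxx; congr Some; apply/val_inj => /=.
    by case: k nk => [[|[|m]] //] /=.
  apply: (finish hc) => // c k e ne.
  case: (eqVneq (split c) (inl i)) => e1.
    move: e; rewrite e1 /= eqxx => -[ek]; move/eqP: ne; case.
    by rewrite -ek /pr2 eqxx -(splitK c) e1.
  case: (eqVneq (split c) (inr i)) => e2.
    move: e; rewrite e2 /= eqxx => -[ek]; move/eqP: ne; case.
    by rewrite -ek /pr2 -(splitK c) e2.
  exact: hz.
Qed.

Lemma R1 : (1 <= \rank H)%N ->
  exists (qa qb : 'I_g -> fword 1),
    surface_hom qa qb /\ surface_hom_surj qa qb /\
    row_full (H *m ab_mod_p_map p qa qb).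
Proof.
move=> h1.
have [c hc] : exists c, row c K != 0.
  apply: NNPP => hna; move: h1; rewrite -mxrank_tr -/K.
  suff -> : K = 0 by rewrite mxrank0.
  apply/row_matrixP => i; rewrite row0; apply/eqP; apply: NNPP => hi.
  by apply: hna; exists i; apply/negP.
pose t s : option 'I_1 := if s == split c then Some ord0 else None.
have ht : forall k, t (split ((fun _ : 'I_1 => c) k)) = Some k.
  by move=> k; rewrite /t eqxx (ord1 k).
exists (qA t), (qB t); split; [|split].
- apply: rel_trivial => i; rewrite /t.
  case: (eqVneq (inl i) (split c)) => e; last by left.
  by right; rewrite -e.
- exact: (surj_wt (f := fun _ => split c)).
- apply: (finish ht).
    move=> j k; rewrite /t; case: eqVneq => // e _; move/eqP; case.
    by rewrite -(splitK j) e splitK.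
  by rewrite -rowEsub rank_rV hc.
Qed.

Lemma R2 (Hg : (2 <= g)%N) : (2 <= \rank H)%N ->
  exists (qa qb : 'I_g -> fword 2),
    surface_hom qa qb /\ surface_hom_surj qa qb /\
    row_full (H *m ab_mod_p_map p qa qb).
Proof.
rewrite -mxrank_tr -/K => /rank2_exists [a [b hab]].
case: (classic (samepair (split a) (split b))); last exact: DP hab.
move=> [i hi].
have hr : (2 <= \rank (rowsub (pr2 (lshift g i) (rshift g i)) K))%N.
  case: hi => [[ea eb]|[ea eb]].
    by rewrite -(splitK a) -(splitK b) ea eb in hab.
  by rewrite rank2_swap -(splitK a) -(splitK b) ea eb in hab.
have inpair : forall x, split x = inl i \/ split x = inr i ->
   forall c, split c != inl i -> split c != inr i -> ~ samepair (split x) (split c).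
  move=> x hx c n1 n2 [i' [[e1 e2]|[e1 e2]]]; case: hx => e; rewrite e in e1;
    (try by []); case: e1 => ei; subst i'; by [rewrite e2 eqxx in n2 | rewrite e2 eqxx in n1].
have ha : split a = inl i \/ split a = inr i by case: hi => [[-> _]|[-> _]]; [left|right].
have hb : split b = inl i \/ split b = inr i by case: hi => [[_ ->]|[_ ->]]; [right|left].
case: (classic (exists c, [/\ split c != inl i, split c != inr i &
   (2 <= \rank (rowsub (pr2 a c) K))%N \/ (2 <= \rank (rowsub (pr2 b c) K))%N])).
  move=> [c [n1 n2 [h|h]]].
    exact: DP h (inpair a ha c n1 n2).
  exact: DP h (inpair b hb c n1 n2).
move=> hn; apply: (SPcase Hg hr) => c n1 n2.
apply: (rank2_zero hab).
  by rewrite leqNgt; apply/negP => h; apply: hn; exists c; split => //; left.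
by rewrite leqNgt; apply/negP => h; apply: hn; exists c; split => //; right.
Qed.

End Main.

End Helpers.
Import Helpers.

(* A subgroup H of pi^ab/p = ('F_p)^(2g) is an F_p-subspace, represented as
   the row space of a square matrix H; its rank is \rank H. *)
Theorem lemma11 (p g r : nat) (Hp : prime p) (Hg : (2 <= g)%N)
    (Hr : (1 <= r <= 2)%N) (H : 'M['F_p]_(g + g)) (HH : (r <= \rank H)%N) :
  exists (qa qb : 'I_g -> fword r),
    surface_hom qa qb /\ surface_hom_surj qa qb /\
    row_full (H *m ab_mod_p_map p qa qb).
Proof.
case: r Hr HH => [|[|[|r]]] //= _ HH.
  exact: (R1 HH).
exact: (R2 Hg HH).
Qed.
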